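(* Let $M$ be the free $\mathbb{Z}[p^{\pm1}]$-module with free basis $e_1,\dots,e_n,f_1,\dots,f_n$. For $i=1,\dots,n-1$ define module automorphisms $\Theta(\sigma_i):e_i\mapsto e_{i+1}+pf_{i+1},\ e_{i+1}\mapsto e_i-pf_{i+1}$ and $\Theta(\rho_i):e_i\mapsto e_{i+1},\ e_{i+1}\mapsto e_i,\ f_i\mapsto f_{i+1},\ f_{i+1}\mapsto f_i$, all other basis elements being fixed. Then this assignment extends to a linear representation $\Theta:FVB_n\to{\rm Aut}(M)$, and this representation does not preserve the forbidden relations, i.e. for $n\ge3$ and $i=1,\dots,n-2$, $\Theta(\rho_i\sigma_{i+1}\sigma_i)\ne\Theta(\sigma_{i+1}\sigma_i\rho_{i+1})$.
   Context: $FVB_n$ is the flat virtual braid group: generators $\sigma_1,\dots,\sigma_{n-1},\rho_1,\dots,\rho_{n-1}$, relations $\sigma_i\sigma_j=\sigma_j\sigma_i$, $\rho_i\rho_j=\rho_j\rho_i$, $\sigma_i\rho_j=\rho_j\sigma_i$ for $|i-j|\ge2$; $\sigma_i\sigma_{i+1}\sigma_i=\sigma_{i+1}\sigma_i\sigma_{i+1}$; $\rho_i\rho_{i+1}\rho_i=\rho_{i+1}\rho_i\rho_{i+1}$; $\rho_i\rho_{i+1}\sigma_i=\sigma_{i+1}\rho_i\rho_{i+1}$; $\rho_i^2=\sigma_i^2=1$. The forbidden relations are $\rho_i\sigma_{i+1}\sigma_i=\sigma_{i+1}\sigma_i\rho_{i+1}$. Maps are composed on the right: $(fg)(x)=g(f(x))$.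 *)

(* Defs.v *)
From HB Require Import structures.
From mathcomp Require Import all_boot all_order all_algebra fraction.
Set Implicit Arguments. Unset Strict Implicit. Unset Printing Implicit Defensive.
Import Order.TTheory GRing.Theory Num.Theory.
Local Open Scope ring_scope.

Definition F := {fraction {poly int}}.
Definition p : F := @FracField.tofrac _ ('X : {poly int}).

(* M has basis e_1..e_n, f_1..f_n; in 'I_(n+n), e_j has index j-1 and
   f_j has index n+j-1 (j is 1-based). *)
Definition eidx (n j : nat) : nat := j.-1.
Definition fidx (n j : nat) : nat := n + j.-1.

(* Endomorphisms are matrices acting on ROW vectors: row r of the matrix is the
   image of the r-th basis vector.  Hence (fg)(x) = g(f(x)) corresponds to the
   matrix product Theta(f) *m Theta(g), as in the paper's convention. *)

Definition thetaS (n i : nat) : 'M[F]_(n + n) :=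
  \matrix_(r, c)
    if val r == eidx n i then
      ((val c == eidx n i.+1)%:R + (val c == fidx n i.+1)%:R * p)
    else if val r == eidx n i.+1 then
      ((val c == eidx n i)%:R - (val c == fidx n i.+1)%:R * p)
    else (r == c)%:R.

Definition thetaR (n i : nat) : 'M[F]_(n + n) :=
  \matrix_(r, c)
    if val r == eidx n i then (val c == eidx n i.+1)%:R
    else if val r == eidx n i.+1 then (val c == eidx n i)%:R
    else if val r == fidx n i then (val c == fidx n i.+1)%:R
    else if val r == fidx n i.+1 then (val c == fidx n i)%:R
    else (r == c)%:R.

(* The images satisfy all defining relations of FVB_n, so (von Dyck) the
   assignment extends to a homomorphism FVB_n -> Aut(M). *)
Definition FVB_relations (n : nat) : Prop :=
  (forall i, 1 <= i < n ->
      thetaS n i \in unitmx /\ thetaR n i \in unitmx)%N /\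
  (forall i j, 1 <= i < n -> 1 <= j < n -> (2 <= `|(i:int) - (j:int)|)%N ->
      [/\ thetaS n i *m thetaS n j = thetaS n j *m thetaS n i,
          thetaR n i *m thetaR n j = thetaR n j *m thetaR n i &
          thetaS n i *m thetaR n j = thetaR n j *m thetaS n i])%N /\
  (forall i, 1 <= i -> i.+1 < n ->
      [/\ thetaS n i *m thetaS n i.+1 *m thetaS n i
            = thetaS n i.+1 *m thetaS n i *m thetaS n i.+1,
          thetaR n i *m thetaR n i.+1 *m thetaR n i
            = thetaR n i.+1 *m thetaR n i *m thetaR n i.+1 &
          thetaR n i *m thetaR n i.+1 *m thetaS n i
            = thetaS n i.+1 *m thetaR n i *m thetaR n i.+1])%N /\
  (forall i, 1 <= i < n ->
      thetaR n i *m thetaR n i = 1%:M /\ thetaS n i *m thetaS n i = 1%:M)%N.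

(* Main.v *)
Require Import Defs.
From HB Require Import structures.
From mathcomp Require Import all_boot all_order all_algebra fraction.
From mathcomp Require Import zify ring.
Import GRing.Theory.
Local Open Scope ring_scope.

Section S.
Variable n : nat.
Definition u (m : nat) : 'rV[F]_(n + n) := \row_c (val c == m)%:R.

Lemma u_mul (A : 'M[F]_(n+n)) (k : 'I_(n+n)) : u k *m A = row k A.
Proof.
have -> : u k = delta_mx 0 k.
  by apply/rowP => c; rewrite !mxE eqxx.
by rewrite -rowE.
Qed.

Lemma u_out m : (n + n <= m)%N -> u m = 0.
Proof.
move=> hm; apply/rowP => c; rewrite !mxE.
by case: c => c hc /=; have -> : (c == m) = false by apply/eqP; lia.
Qed.

Lemma uS i m : (1 <= i < n)%N ->
  u m *m thetaS n i = if m == i.-1 then u i + p *: u (n + i)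
                      else if m == i then u i.-1 - p *: u (n + i) else u m.
Proof.
move=> hi; case: (ltnP m (n+n)) => hm; last first.
  rewrite u_out // mul0mx.
  have -> : (m == i.-1) = false by apply/eqP; lia.
  have -> : (m == i) = false by apply/eqP; lia.
  by [].
rewrite (u_mul _ (Ordinal hm)); apply/rowP => c; rewrite !mxE /=.
rewrite /eidx /fidx /=.
case: ifP => _; first by rewrite /u !mxE mulrC.
case: ifP => _; first by rewrite /u !mxE mulrC.
by rewrite /u !mxE eq_sym.
Qed.

Lemma uR i m : (1 <= i < n)%N ->
  u m *m thetaR n i = if m == i.-1 then u i
                      else if m == i then u i.-1
                      else if m == n + i.-1 then u (n + i)
                      else if m == n + i then u (n + i.-1) else u m.
Proof.
move=> hi; case: (ltnP m (n+n)) => hm; last first.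
  rewrite u_out // mul0mx.
  have -> : (m == i.-1) = false by apply/eqP; lia.
  have -> : (m == i) = false by apply/eqP; lia.
  have -> : (m == n + i.-1) = false by apply/eqP; lia.
  have -> : (m == n + i) = false by apply/eqP; lia.
  by [].
rewrite (u_mul _ (Ordinal hm)); apply/rowP => c; rewrite !mxE /=.
rewrite /eidx /fidx /=.
case: ifP => _; first by rewrite /u !mxE.
case: ifP => _; first by rewrite /u !mxE.
case: ifP => _; first by rewrite /u !mxE.
case: ifP => _; first by rewrite /u !mxE.
by rewrite /u !mxE eq_sym.
Qed.

Lemma matE (A B : 'M[F]_(n+n)) : (forall m, u m *m A = u m *m B) -> A = B.
Proof.
move=> h; apply/row_matrixP => k; by rewrite -!u_mul h.
Qed.
End S.

Ltac decide_eqs :=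
  repeat match goal with
  | |- context[(?a == ?b :> nat)] =>
     first [ have ->: (a == b) = true by apply/eqP; lia
           | have ->: (a == b) = false by apply/eqP; lia
           | case: (@eqP _ a b) => ?; try subst ]
  end; cbv iota beta.

Ltac crunch t :=
  rewrite ?mulmxA;
  repeat progress (t; decide_eqs; rewrite ?mulmxDl ?mulmxBl ?mulNmx -?scalemxAl);
  apply/rowP; case => ? ?; rewrite /u !mxE /=; decide_eqs; rewrite /=.

Ltac crunch0 t :=
  rewrite ?mulmxA;
  repeat progress (t; decide_eqs; rewrite ?mulmxDl ?mulmxBl ?mulNmx -?scalemxAl).

Lemma braidS n i : (1 <= i)%N -> (i.+1 < n)%N ->
  thetaS n i *m thetaS n i.+1 *m thetaS n i
            = thetaS n i.+1 *m thetaS n i *m thetaS n i.+1.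
Proof.
move=> h1 h2; have hi : (1 <= i < n)%N by lia.
have hi1 : (1 <= i.+1 < n)%N by lia.
apply: matE => m.
crunch ltac:(rewrite ?(uS _ _ _ hi) ?(uS _ _ _ hi1)).
all: ring.
Qed.

Lemma braidR n i : (1 <= i)%N -> (i.+1 < n)%N ->
  thetaR n i *m thetaR n i.+1 *m thetaR n i
            = thetaR n i.+1 *m thetaR n i *m thetaR n i.+1.
Proof.
move=> h1 h2; have hi : (1 <= i < n)%N by lia.
have hi1 : (1 <= i.+1 < n)%N by lia.
apply: matE => m.
crunch ltac:(rewrite ?(uR _ _ _ hi) ?(uR _ _ _ hi1)).
all: try ring.
Qed.

Lemma mixed n i : (1 <= i)%N -> (i.+1 < n)%N ->
  thetaR n i *m thetaR n i.+1 *m thetaS n i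
            = thetaS n i.+1 *m thetaR n i *m thetaR n i.+1.
Proof.
move=> h1 h2; have hi : (1 <= i < n)%N by lia.
have hi1 : (1 <= i.+1 < n)%N by lia.
apply: matE => m.
crunch ltac:(rewrite ?(uR _ _ _ hi) ?(uR _ _ _ hi1) ?(uS _ _ _ hi) ?(uS _ _ _ hi1)).
all: try ring.
Qed.

Lemma sqS n i : (1 <= i < n)%N -> thetaS n i *m thetaS n i = 1%:M.
Proof.
move=> hi; apply: matE => m; rewrite mulmx1.
crunch ltac:(rewrite ?(uS _ _ _ hi)).
all: try ring.
Qed.

Lemma sqR n i : (1 <= i < n)%N -> thetaR n i *m thetaR n i = 1%:M.
Proof.
move=> hi; apply: matE => m; rewrite mulmx1.
crunch ltac:(rewrite ?(uR _ _ _ hi)).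
all: try ring.
Qed.

Lemma commSS n i j : (1 <= i < n)%N -> (1 <= j < n)%N -> (i.+2 <= j)%N ->
  thetaS n i *m thetaS n j = thetaS n j *m thetaS n i.
Proof.
move=> hi hj hij; apply: matE => m.
crunch ltac:(rewrite ?(uS _ _ _ hi) ?(uS _ _ _ hj)).
all: try ring.
Qed.

Lemma commRR n i j : (1 <= i < n)%N -> (1 <= j < n)%N -> (i.+2 <= j)%N ->
  thetaR n i *m thetaR n j = thetaR n j *m thetaR n i.
Proof.
move=> hi hj hij; apply: matE => m.
crunch ltac:(rewrite ?(uR _ _ _ hi) ?(uR _ _ _ hj)).
all: try ring.
Qed.

Lemma commSR n i j : (1 <= i < n)%N -> (1 <= j < n)%N ->
  ((i.+2 <= j) || (j.+2 <= i))%N ->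
  thetaS n i *m thetaR n j = thetaR n j *m thetaS n i.
Proof.
move=> hi hj /orP hij; apply: matE => m.
crunch ltac:(rewrite ?(uS _ _ _ hi) ?(uR _ _ _ hj)).
all: try ring.
Qed.

Lemma forb n i : (3 <= n)%N -> (1 <= i <= n - 2)%N ->
     thetaR n i *m thetaS n i.+1 *m thetaS n i
       <> thetaS n i.+1 *m thetaS n i *m thetaR n i.+1.
Proof.
move=> hn hi'; have hi : (1 <= i < n)%N by lia.
have hi1 : (1 <= i.+1 < n)%N by lia.
have hc : (n + i.-1 < n + n)%N by lia.
move/(congr1 (mulmx (u n (n + i.-1)))).
crunch0 ltac:(rewrite ?(uR _ _ _ hi) ?(uR _ _ _ hi1) ?(uS _ _ _ hi) ?(uS _ _ _ hi1)).
move/rowP/(_ (Ordinal hc)); rewrite /u !mxE /=; decide_eqs; rewrite /=.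
by move/eqP; rewrite eq_sym oner_eq0.
Qed.

Lemma absP (i j : nat) : (2 <= `|(i:int) - (j:int)|)%N -> ((i.+2 <= j) || (j.+2 <= i))%N.
Proof. move=> h; apply/orP; lia. Qed.

Theorem theorem2 (n : nat) :
  FVB_relations n /\
  (3 <= n -> forall i, 1 <= i <= n - 2 ->
     thetaR n i *m thetaS n i.+1 *m thetaS n i
       <> thetaS n i.+1 *m thetaS n i *m thetaR n i.+1)%N.
Proof.
split; last by move=> hn i hi; apply: forb.
split.
  move=> i hi; split.
    by case: (mulmx1_unit (@sqS n i hi)).
  by case: (mulmx1_unit (@sqR n i hi)).
split.
  move=> i j hi hj /absP hij; split; last exact: commSR.
    by case/orP: hij => h; [apply: commSS | symmetry; apply: commSS].
  by case/orP: hij => h; [apply: commRR | symmetry; apply: commRR].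
split.
  move=> i h1 h2; split; [exact: braidS | exact: braidR | exact: mixed].
move=> i hi; split; [exact: sqR | exact: sqS].
Qed.
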